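(* Let $G$ be a finite group. The minimal cardinality of a generating set of $G$ is at most the minimal length $\ell$ of a chain of subgroups $\{e\}=H_0<H_1<\dots<H_\ell=G$ such that every interval $[H_i,H_{i+1}]$ of the subgroup lattice is top Boolean.
   Context: For subgroups $H\subseteq K$ of $G$, $[H,K]$ is the lattice of subgroups between $H$ and $K$. The top interval of a finite lattice $L$ is $[t,\hat 1]$ where $t$ is the meet of all coatoms (maximal elements of $L\setminus\{\hat 1\}$); $L$ is top Boolean if its top interval is a Boolean lattice (distributive, bounded, every element has a unique complement). *)

(* Defs.v *)
From mathcomp Require Import all_boot all_fingroup.
Set Implicit Arguments. Unset Strict Implicit. Unset Printing Implicit Defensive.
Local Open Scope group_scope.

Section TopBoolean.
Variable gT : finGroupType.
Implicit Types H K M A B C : {group gT}.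

Definition in_interval H K M : bool := (H \subset M) && (M \subset K).

Definition coatom H K M : bool :=
  [&& in_interval H K M, M :!=: K &
      [forall M' : {group gT},
         [&& in_interval H K M', M \subset M' & M' :!=: K] ==> (M' :==: M)]].

(* meet of all coatoms of [H, K] (taken inside K, so it is K when there are none) *)
Definition top_bottom H K : {set gT} :=
  K :&: \bigcap_(M : {group gT} | coatom H K M) (M : {set gT}).

Definition in_top H K M : bool := (top_bottom H K \subset M) && (M \subset K).

(* The lattice [t, K] (meet = intersection, join = generated subgroup, bottom t,
   top K) is Boolean: distributive, and every element has a unique complement. *)
Definition top_boolean H K : Prop :=
  (forall A B C, in_top H K A -> in_top H K B -> in_top H K C ->
     A :&: (B <*> C) = (A :&: B) <*> (A :&: C)) /\
  (forall A, in_top H K A ->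
     exists B, [/\ in_top H K B, A :&: B = top_bottom H K, A <*> B = K &
       forall B', in_top H K B' -> A :&: B' = top_bottom H K -> A <*> B' = K ->
         B' = B]).
End TopBoolean.

(* Main.v *)
Require Import Defs.
From mathcomp Require Import all_boot all_fingroup.
Set Implicit Arguments. Unset Strict Implicit. Unset Printing Implicit Defensive.
Local Open Scope group_scope.

Lemma coatom_top (gT : finGroupType) (H K M : {group gT}) :
  coatom H K M -> in_top H K M.
Proof.
move=> cM; have /and3P[/andP[_ mK] _ _] := cM.
rewrite /in_top mK andbT /top_bottom; apply: subIset; apply/orP; right.
by apply: (bigcap_inf M (P := coatom H K)) cM.
Qed.

Lemma coatom_join (gT : finGroupType) (H K M M' : {group gT}) :
  coatom H K M -> coatom H K M' -> M != M' -> M <*> M' = K.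
Proof.
move=> cM cM' nMM'.
have /and3P[/andP[hM mK] nMK /forallP fM] := cM.
have /and3P[/andP[hM' mK'] nMK' /forallP fM'] := cM'.
apply/eqP; apply: contraNT nMM' => nJ.
have := fM (M <*> M')%G.
rewrite /in_interval /= joing_subl nJ andbT.
have -> : H \subset M <*> M' by apply: subset_trans hM (joing_subl _ _).
have -> : M <*> M' \subset K by apply/joing_subP.
move=> /implyP /(_ isT) /eqP eJ.
have sM'M : M' \subset M by rewrite -eJ joing_subr.
have := fM' M; rewrite /in_interval hM mK sM'M nMK /= => /eqP e.
by apply/eqP; apply: val_inj; rewrite /= e.
Qed.

Lemma coatom_elt (gT : finGroupType) (H K M : {group gT}) :
  top_boolean H K -> coatom H K M ->
  exists b, [/\ b \in K, b \notin M &
    forall M', coatom H K M' -> M' != M -> b \in M'].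
Proof.
move=> [dist compl] cM.
have tM := coatom_top cM.
have /and3P[/andP[hM mK] nMK _] := cM.
have [B [tB MB MBK _]] := compl M tM.
have /andP[tbB BK] := tB.
have nBM : ~~ (B \subset M).
  by apply: contra nMK => /joing_idPl e; rewrite -MBK e.
case/subsetPn: nBM => b bB bnM.
exists b; split => //; first exact: (subsetP BK).
move=> M' cM' nM'M.
have tM' := coatom_top cM'.
have := dist B M M' tB tM tM'.
rewrite (coatom_join cM cM') ?(eq_sym M) //.
rewrite (setIidPl BK) setIC MB => eB.
suff : B \subset M' by move/subsetP; apply.
rewrite eB joingE gen_subG subUset subsetIr andbT.
by have /andP[] := tM'.
Qed.

Lemma prod_avoid (gT : finGroupType) (H K : {group gT}) (s : seq {group gT}) :
  top_boolean H K -> uniq s -> all (coatom H K) s ->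
  exists g, g \in K /\ forall M, coatom H K M -> (g \in M) = (M \notin s).
Proof.
move=> tb; elim: s => [|M0 s IH] /=.
  by move=> _ _; exists 1; split => // M _; rewrite group1.
case/andP=> nM0s us /andP[cM0 as_].
have [g [gK hg]] := IH us as_.
have [b [bK bnM0 bM]] := coatom_elt tb cM0.
exists (g * b); split; first by rewrite groupM.
move=> M cM; rewrite in_cons.
have [->|nM] := eqVneq M M0.
  by rewrite ?eqxx /= groupMl ?hg ?nM0s // (negbTE bnM0).
by rewrite /= groupMr ?hg // bM.
Qed.

Lemma one_gen (gT : finGroupType) (H K : {group gT}) :
  H \proper K -> top_boolean H K ->
  exists g, g \in K /\ <<H :|: [set g]>> = K.
Proof.
move=> pHK tb.
have aE : all (coatom H K) (enum (coatom H K)) by apply/allP => M; rewrite mem_enum.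
have [g [gK hg]] := prod_avoid tb (enum_uniq _) aE.
exists g; split => //.
have HK := proper_sub pHK.
have LK : <<H :|: [set g]>> \subset K by rewrite gen_subG subUset HK sub1set.
apply/eqP; rewrite eqEsubset LK /=; apply/negPn/negP => nKL.
have nLK : <<H :|: [set g]>>%G :!=: K.
  by apply: contra nKL => /eqP <-.
pose gP := (fun M : {group gT} => in_interval H K M && (M :!=: K)).
have P0 : gP <<H :|: [set g]>>%G.
  by rewrite /gP /in_interval /= LK nLK andbT andbT (subset_trans (subsetUl _ _) (subset_gen _)).
have [M mM LM] := @maxgroup_exists _ gP _ P0.
have /maxgroupP[/andP[iM nMK] fM] := mM.
have cM : coatom H K M.
  rewrite /coatom iM nMK /=; apply/forallP => M'; apply/implyP => /and3P[iM' MM' nM'K].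
  by rewrite (fM M') ?eqxx // /gP iM' nM'K.
have := hg M cM; rewrite mem_enum.
have -> : g \in M.
  by apply: (subsetP LM); apply: mem_gen; rewrite in_setU set11 orbT.
by have : M \in coatom H K by []; move=> ->.
Qed.

Theorem corollary6p2 (gT : finGroupType) (G : {group gT})
    (l : nat) (H : nat -> {group gT}) :
  H 0%N = 1%G :> {group gT} ->
  H l = G ->
  (forall i, (i < l)%N -> H i \proper H i.+1) ->
  (forall i, (i < l)%N -> top_boolean (H i) (H i.+1)) ->
  exists S : {set gT}, <<S>>%g = G /\ (#|S| <= l)%N.
Proof.
move=> H0 Hl Hp Hb.
suff : forall i, (i <= l)%N -> exists S : {set gT}, <<S>> = H i /\ (#|S| <= i)%N.
  by move=> /(_ l (leqnn l)) [S [eS cS]]; exists S; rewrite eS Hl.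
elim=> [|i IH] il.
  by exists set0; rewrite gen0 H0 cards0.
have [S [eS cS]] := IH (ltnW il).
have [g [gK eg]] := one_gen (Hp i il) (Hb i il).
exists (g |: S); split.
  by rewrite setUC -joingE -joing_idl eS joingE.
by rewrite cardsU1; case: (g \notin S) => /=; rewrite ?add1n ?add0n // (leq_trans cS).
Qed.
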